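(* Let $k\ge1$ be an integer. Every uniformizable $k$-primal topological space is a functional Alexandroff space.
   Context: For a topological space $X$ and $a\in X$, $V(a):=\bigcap\{U: U\text{ open}, a\in U\}$. For $f:X\to X$ and $a\in X$, $V_f(a):=\bigcup_{n\ge0}f^{-n}(a)=\{x:\exists n\ge0,\ f^n(x)=a\}$. A topological space $X$ is $k$-primal if there exist maps $f_1,\dots,f_k:X\to X$ such that for each $a\in X$ the set $V_{f_1}(a)\cap\cdots\cap V_{f_k}(a)$ is open and is the smallest open neighbourhood of $a$ (i.e. equals $V(a)$ and is open). $X$ is a functional Alexandroff space if there is $f:X\to X$ such that the topology with basis $\{V_f(a):a\in X\}$ equals the topology of $X$ (equivalently, $X$ is $1$-primal). $X$ is uniformizable if its topology is induced by some uniform structure on $X$. *)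

(* Defs.v *)
From HB Require Import structures.
From mathcomp Require Import all_boot all_order.
From mathcomp Require Import boolp classical_sets topology.
Set Implicit Arguments. Unset Strict Implicit. Unset Printing Implicit Defensive.
Local Open Scope classical_set_scope.

Definition Vmin {T : topologicalType} (a : T) : set T :=
  \bigcap_(U in [set U : set T | open U /\ U a]) U.

Definition Vf {T : Type} (f : T -> T) (a : T) : set T :=
  [set x | exists n : nat, iter n f x = a].

Definition k_primal (T : topologicalType) (k : nat) : Prop :=
  exists fs : 'I_k -> (T -> T), forall a : T,
    open (\bigcap_(i in [set: 'I_k]) Vf (fs i) a) /\
    \bigcap_(i in [set: 'I_k]) Vf (fs i) a = Vmin a.

(* X is a functional Alexandroff space: the topology with basis
   {V_f(a) : a in X} (open sets = unions of basis elements) equals that of X *)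
Definition functional_alexandroff (T : topologicalType) : Prop :=
  exists f : T -> T, forall U : set T,
    open U <-> (forall x, U x -> exists a, Vf f a x /\ Vf f a `<=` U).

Definition uniform_structure {T : Type} (ent : set (set (T * T))) : Prop :=
  ent setT /\
  (forall E F, ent E -> E `<=` F -> ent F) /\
  (forall E F, ent E -> ent F -> ent (E `&` F)) /\
  (forall E, ent E -> forall x, E (x, x)) /\
  (forall E, ent E -> ent [set p | E (p.2, p.1)]) /\
  (forall E, ent E -> exists F, ent F /\
      (forall x y z, F (x, y) -> F (y, z) -> E (x, z))).

Definition uniformizable (T : topologicalType) : Prop :=
  exists ent : set (set (T * T)), uniform_structure ent /\
    forall U : set T,
      open U <-> (forall x, U x -> exists2 E, ent E & [set y | E (x, y)] `<=` U).

(* Main.v *)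
Require Import Defs.
From mathcomp Require Import all_boot all_order.
From mathcomp Require Import boolp classical_sets topology.
Unset Implicit Arguments.
Local Open Scope classical_set_scope.

Section Aux.
Variable T : topologicalType.

Lemma VminP (a x : T) : Vmin a x <-> (forall U, open U -> U a -> U x).
Proof.
split; first by move=> H U oU Ua; exact: (H U (conj oU Ua)).
by move=> H U [oU Ua]; exact: H.
Qed.

Lemma Vmin_refl (x : T) : Vmin x x.
Proof. by apply/VminP. Qed.

Lemma Vmin_trans (x y z : T) : Vmin x y -> Vmin y z -> Vmin x z.
Proof.
move=> /VminP Hxy /VminP Hyz; apply/VminP => U oU Ux.
exact: Hyz _ oU (Hxy _ oU Ux).
Qed.

Lemma Vmin_sym (ent : set (set (T * T))) : uniform_structure ent ->
  (forall U : set T,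
      open U <-> (forall x, U x -> exists2 E, ent E & [set y | E (x, y)] `<=` U)) ->
  forall x y : T, Vmin x y -> Vmin y x.
Proof.
move=> [entT [entS [entI [entR [entT' entC]]]]] Hop x y Vxy.
have allE : forall E, ent E -> E (x, y).
  move=> E eE.
  pose O := [set z | exists2 G, ent G & [set w | G (z, w)] `<=` [set w | E (x, w)]].
  have oO : open O.
    apply/Hop => z [G eG HG].
    have [H [eH HH]] := entC _ eG.
    exists H => // w Hzw; exists H => // v Hwv.
    apply: HG; exact: HH _ _ _ Hzw Hwv.
  have Ox : O x by exists E.
  have [G eG HG] := (proj1 (VminP _ _) Vxy) O oO Ox.
  exact: HG _ (entR _ eG y).
apply/VminP => U oU Uy.
have [E eE HE] := (proj1 (Hop U) oU) y Uy.
apply: HE; exact: (allE _ (entT' _ eE)).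
Qed.

Lemma Vmin_sub (x : T) U : open U -> U x -> Vmin x `<=` U.
Proof. by move=> oU Ux z /VminP H; exact: H. Qed.

End Aux.
Arguments Vmin_trans {T x y z}.
Arguments Vmin_refl {T}.
Arguments Vmin_sub {T x U}.
Arguments VminP {T}.
Arguments Vmin_sym {T ent}.

Section Nxt.
Variable T : topologicalType.
Variable f0 : T -> T.

Definition Pn (x : T) : pred nat :=
  fun m => `[< (0 < m)%N /\ Vmin x (iter m f0 x) >].

Definition nxt (x : T) : T :=
  match pselect (exists m, Pn x m) with
  | left e => iter (ex_minn e) f0 x
  | right _ => x
  end.

Lemma nxt_in x : Vmin x (nxt x).
Proof.
rewrite /nxt; case: pselect => [e|_]; last exact: Vmin_refl.
by case: ex_minnP => m /asboolP [].
Qed.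

Hypothesis sym : forall x y : T, Vmin x y -> Vmin y x.

Lemma key j : forall x a, Vmin x a -> iter j f0 x = a -> exists n, iter n nxt x = a.
Proof.
elim: j {-2}j (leqnn j) => [|N IH] j.
  by rewrite leqn0 => /eqP -> x a _ <-; exists 0%N.
case: j => [|j] Hj x a Vxa Hit; first by exists 0%N.
have Pj : Pn x j.+1 by apply/asboolP; split => //; rewrite Hit.
have e : exists m, Pn x m by exists j.+1.
have Hn : nxt x = iter (ex_minn e) f0 x.
  by rewrite /nxt; case: pselect => [e'|/(_ e)] //; congr iter; apply: eq_ex_minn.
move: Hn; case: ex_minnP => m /asboolP [m0 Vm] Hmin Hn.
have mj := Hmin _ Pj.
have Vna : Vmin (nxt x) a.
  have h1 := sym _ _ (nxt_in x). exact: (Vmin_trans h1 Vxa).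
have [n Hn'] : exists n, iter n nxt (nxt x) = a.
  apply: (IH (j.+1 - m)%N); [| exact: Vna|].
    rewrite ltnS in Hj; apply: leq_trans Hj; by rewrite leq_subLR addnC -addn1 leq_add2l.
  by rewrite Hn -iterD subnK.
by exists n.+1; rewrite iterSr.
Qed.

End Nxt.

Theorem mainTheorem7 (k : nat) (T : topologicalType) :
  (1 <= k)%N -> uniformizable T -> k_primal T k -> functional_alexandroff T.
Proof.
move=> k1 [ent [Hent Hop]] [fs Hfs].
have sym := Vmin_sym Hent Hop.
pose f0 := fs (Ordinal k1).
have Hf0 : forall a x, Vmin a x -> exists j, iter j f0 x = a.
  move=> a x Vax; have [_ Heq] := Hfs a; rewrite -Heq in Vax.
  exact: (Vax (Ordinal k1) I).
have oV : forall a : T, open (Vmin a).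
  by move=> a; have [o Heq] := Hfs a; rewrite -Heq.
have VfE : forall a : T, Vf (nxt T f0) a = Vmin a.
  move=> a; apply/seteqP; split => x.
    move=> [n Hn]; apply: sym.
    suff : Vmin x (iter n (nxt T f0) x) by rewrite Hn.
    elim: n {Hn} => [|n IHn]; first exact: Vmin_refl.
    by rewrite iterS; apply: Vmin_trans IHn (nxt_in T f0 _).
  move=> Vax; have [j Hj] := Hf0 _ _ Vax.
  exact: (key T f0 sym j x a (sym _ _ Vax) Hj).
exists (nxt T f0) => U; split.
  move=> oU x Ux; exists x; rewrite VfE; split; first exact: Vmin_refl.
  exact: Vmin_sub.
move=> H.
have -> : U = \bigcup_(a in [set a | Vmin a `<=` U]) Vmin a.
  apply/seteqP; split => x.
    move=> Ux; have [a []] := H x Ux; rewrite VfE => Vax sub.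
    by exists a.
  by move=> [a sub Vax]; exact: sub.
by apply: bigcup_open => a _; exact: oV.
Qed.
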